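(* Let $\beta_\bullet\in\{\beta,\beta_v\}$ and let $\rightsquigarrow_U$ be the unbiased iteration of the associated surface reduction (as in the context). For all terms $U,N$: if $U\to_{\beta_\bullet}N$ and not $U\rightsquigarrow_UN$, then $N$ is not $\beta_\bullet$-normal.
   Context: Terms $\Lambda_{\mathcal O}$: $M::=x\mid\lambda x.M\mid MM\mid\mathsf{op}(M,\dots,M)$ with $\mathsf{op}$ in a (possibly empty) set $\mathcal O$ of operator symbols with fixed arities; values $V::=x\mid\lambda x.M$. Contexts $C::=[\,]\mid MC\mid CM\mid\lambda x.C\mid\mathsf{op}(M,\dots,C,\dots,M)$. Rules $(\lambda x.M)N\mapsto_\beta M\{N/x\}$, $(\lambda x.M)V\mapsto_{\beta_v}M\{V/x\}$ ($V$ a value); $\to_{\beta_\bullet}$ is the closure under all contexts. Surface reduction $\to_s$: for $\beta$, closure of $\beta$ under head contexts $H::=[\,]\mid\lambda x.H\mid HM$; for $\beta_v$, closure of $\beta_v$ under weak contexts $W::=[\,]\mid WM\mid MW$. $\rightsquigarrow_U$ is defined inductively: if $M\to_sM'$ then $M\rightsquigarrow_UM'$; if $M$ is $\to_s$-normal: $\lambda x.P\rightsquigarrow_U\lambda x.P'$ if $P\rightsquigarrow_UP'$; $PQ\rightsquigarrow_UP'Q$ if $P\rightsquigarrow_UP'$; $PQ\rightsquigarrow_UPQ'$ if $Q\rightsquigarrow_UQ'$; $\mathsf{op}(\dots,P_i,\dots)\rightsquigarrow_U\mathsf{op}(\dots,P_i',\dots)$ if $P_i\rightsquigarrow_UP_i'$.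 *)

(* Defs.v *)
(* Lambda terms with operators, in de Bruijn notation
   (terms up to alpha-equivalence). *)
From Stdlib Require Import List Arith.
Import ListNotations.

Section Lambda.
Variable Op : Type.
Variable arity : Op -> nat.

Inductive term : Type :=
| Var : nat -> term
| Lam : term -> term
| App : term -> term -> term
| OpT : Op -> list term -> term.

Fixpoint wf (t : term) : Prop :=
  match t with
  | Var _ => True
  | Lam b => wf b
  | App a b => wf a /\ wf b
  | OpT o ts => length ts = arity o /\ (fix wfl (l : list term) : Prop :=
                   match l with [] => True | u :: l' => wf u /\ wfl l' end) ts
  end.

Fixpoint shift (d c : nat) (t : term) : term :=
  match t with
  | Var n => if Nat.ltb n c then Var n else Var (n + d)
  | Lam b => Lam (shift d (S c) b)
  | App a b => App (shift d c a) (shift d c b)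
  | OpT o ts => OpT o (map (shift d c) ts)
  end.

Fixpoint subst (k : nat) (u : term) (t : term) : term :=
  match t with
  | Var n => if Nat.ltb n k then Var n
             else if Nat.eqb n k then shift k 0 u else Var (pred n)
  | Lam b => Lam (subst (S k) u b)
  | App a b => App (subst k u a) (subst k u b)
  | OpT o ts => OpT o (map (subst k u) ts)
  end.

Definition beta_subst (M N : term) : term := subst 0 N M.

Definition is_value (t : term) : Prop :=
  match t with Var _ | Lam _ => True | _ => False end.

Inductive calculus : Type := CBN | CBV.

Inductive root_step : calculus -> term -> term -> Prop :=
| root_beta : forall M N, root_step CBN (App (Lam M) N) (beta_subst M N)
| root_betav : forall M V, is_value V -> root_step CBV (App (Lam M) V) (beta_subst M V).

Inductive step (c : calculus) : term -> term -> Prop :=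
| st_root : forall M N, root_step c M N -> step c M N
| st_lam : forall M M', step c M M' -> step c (Lam M) (Lam M')
| st_appL : forall M M' N, step c M M' -> step c (App M N) (App M' N)
| st_appR : forall M N N', step c N N' -> step c (App M N) (App M N')
| st_op : forall o l1 l2 M M', step c M M' ->
    step c (OpT o (l1 ++ M :: l2)) (OpT o (l1 ++ M' :: l2)).

Inductive surf : calculus -> term -> term -> Prop :=
| sf_root : forall c M N, root_step c M N -> surf c M N
(* head contexts for beta: [] | lambda x.H | H M *)
| sf_lam_n : forall M M', surf CBN M M' -> surf CBN (Lam M) (Lam M')
| sf_appL_n : forall M M' N, surf CBN M M' -> surf CBN (App M N) (App M' N)
(* weak contexts for beta_v: [] | W M | M W *)
| sf_appL_v : forall M M' N, surf CBV M M' -> surf CBV (App M N) (App M' N)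
| sf_appR_v : forall M N N', surf CBV N N' -> surf CBV (App M N) (App M N').

Definition surf_normal (c : calculus) (M : term) : Prop := forall N, ~ surf c M N.

Inductive unbiased (c : calculus) : term -> term -> Prop :=
| ub_surf : forall M M', surf c M M' -> unbiased c M M'
| ub_lam : forall P P', surf_normal c (Lam P) ->
    unbiased c P P' -> unbiased c (Lam P) (Lam P')
| ub_appL : forall P P' Q, surf_normal c (App P Q) ->
    unbiased c P P' -> unbiased c (App P Q) (App P' Q)
| ub_appR : forall P Q Q', surf_normal c (App P Q) ->
    unbiased c Q Q' -> unbiased c (App P Q) (App P Q')
| ub_op : forall o l1 l2 P P', surf_normal c (OpT o (l1 ++ P :: l2)) ->
    unbiased c P P' -> unbiased c (OpT o (l1 ++ P :: l2)) (OpT o (l1 ++ P' :: l2)).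

Definition normal (c : calculus) (M : term) : Prop := forall N, ~ step c M N.

End Lambda.

Arguments Var {Op}.
Arguments Lam {Op}.
Arguments App {Op}.
Arguments OpT {Op}.

(* Main.v *)
Require Import Defs.
From Stdlib Require Import List.
From Stdlib Require Import Classical.

Lemma step_lam_inv (Op : Type) c (M N : term Op) :
  step Op c (Lam M) N -> exists M', N = Lam M' /\ step Op c M M'.
Proof.
  intros H; inversion H; subst.
  - inversion H0.
  - eauto.
Qed.

Lemma step_value (Op : Type) c (V N : term Op) :
  is_value Op V -> step Op c V N -> is_value Op N.
Proof.
  intros Hv H; destruct V; simpl in Hv; try contradiction.
  - inversion H; subst. inversion H0.
  - apply step_lam_inv in H. destruct H as [M' [-> _]]. exact I.
Qed.

Ltac lam_inv := match goal with H : step _ _ (Lam _) _ |- _ =>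
  apply step_lam_inv in H; destruct H as [? [-> ?]] end.

Lemma key (Op : Type) c (T T1 : term Op) :
  surf Op c T T1 -> forall N, step Op c T N -> ~ surf Op c T N ->
  exists N1, surf Op c N N1.
Proof.
  induction 1; intros N0 Hs Hn.
  - inversion H; subst.
    + inversion Hs; subst.
      * exfalso; apply Hn; apply sf_root; auto.
      * lam_inv. eexists; apply sf_root; constructor.
      * eexists; apply sf_root; constructor.
    + inversion Hs; subst.
      * exfalso; apply Hn; apply sf_root; auto.
      * lam_inv. eexists; apply sf_root; constructor; auto.
      * eexists; apply sf_root; constructor. eapply step_value; eauto.
  - apply step_lam_inv in Hs. destruct Hs as [M1 [-> Hs]].
    destruct (IHsurf M1 Hs) as [N1 HN1].
    + intro Hc; apply Hn; apply sf_lam_n; auto.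
    + eexists; apply sf_lam_n; eauto.
  - inversion Hs; subst.
    + exfalso; apply Hn; apply sf_root; auto.
    + match goal with H : step _ _ M ?X |- _ => rename H into Hst; rename X into Mx end.
      destruct (IHsurf Mx Hst) as [N1 HN1].
      * intro Hc; apply Hn; apply sf_appL_n; auto.
      * eexists; apply sf_appL_n; eauto.
    + eexists; apply sf_appL_n; eauto.
  - inversion Hs; subst.
    + exfalso; apply Hn; apply sf_root; auto.
    + match goal with H : step _ _ M ?X |- _ => rename H into Hst; rename X into Mx end.
      destruct (IHsurf Mx Hst) as [N1 HN1].
      * intro Hc; apply Hn; apply sf_appL_v; auto.
      * eexists; apply sf_appL_v; eauto.
    + eexists; apply sf_appL_v; eauto.
  - inversion Hs; subst.
    + exfalso; apply Hn; apply sf_root; auto.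
    + eexists; apply sf_appR_v; eauto.
    + match goal with H : step _ _ N ?X |- _ => rename H into Hst; rename X into Mx end.
      destruct (IHsurf Mx Hst) as [N1 HN1].
      * intro Hc; apply Hn; apply sf_appR_v; auto.
      * eexists; apply sf_appR_v; eauto.
Qed.

Lemma surf_step (Op : Type) c (M N : term Op) : surf Op c M N -> step Op c M N.
Proof.
  induction 1.
  - constructor; auto.
  - apply st_lam; auto.
  - apply st_appL; auto.
  - apply st_appL; auto.
  - apply st_appR; auto.
Qed.

Theorem mainTheorem13 (Op : Type) (arity : Op -> nat) (c : calculus) (U N : term Op) :
  wf Op arity U -> step Op c U N -> ~ unbiased Op c U N -> ~ normal Op c N.
Proof.
  intros _ Hs. induction Hs; intros Hu Hnorm.
  - apply Hu. apply ub_surf. apply sf_root; auto.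
  - destruct (Classical_Prop.classic (surf_normal Op c (Lam M))) as [Hsn|Hsn].
    + apply IHHs.
      * intro H; apply Hu; apply ub_lam; auto.
      * intros N1 H1; apply (Hnorm (Lam N1)); apply st_lam; auto.
    + unfold surf_normal in Hsn.
      apply Classical_Pred_Type.not_all_not_ex in Hsn. destruct Hsn as [T1 HT1].
      destruct (key Op c _ _ HT1 (Lam M')) as [N1 HN1].
      * apply st_lam; auto.
      * intro H; apply Hu; apply ub_surf; auto.
      * apply (Hnorm N1); apply surf_step; auto.
  - destruct (Classical_Prop.classic (surf_normal Op c (App M N))) as [Hsn|Hsn].
    + apply IHHs.
      * intro H; apply Hu; apply ub_appL; auto.
      * intros N1 H1; apply (Hnorm (App N1 N)); apply st_appL; auto.
    + unfold surf_normal in Hsn.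
      apply Classical_Pred_Type.not_all_not_ex in Hsn. destruct Hsn as [T1 HT1].
      destruct (key Op c _ _ HT1 (App M' N)) as [N1 HN1].
      * apply st_appL; auto.
      * intro H; apply Hu; apply ub_surf; auto.
      * apply (Hnorm N1); apply surf_step; auto.
  - destruct (Classical_Prop.classic (surf_normal Op c (App M N))) as [Hsn|Hsn].
    + apply IHHs.
      * intro H; apply Hu; apply ub_appR; auto.
      * intros N1 H1; apply (Hnorm (App M N1)); apply st_appR; auto.
    + unfold surf_normal in Hsn.
      apply Classical_Pred_Type.not_all_not_ex in Hsn. destruct Hsn as [T1 HT1].
      destruct (key Op c _ _ HT1 (App M N')) as [N1 HN1].
      * apply st_appR; auto.
      * intro H; apply Hu; apply ub_surf; auto.
      * apply (Hnorm N1); apply surf_step; auto.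
  - destruct (Classical_Prop.classic (surf_normal Op c (OpT o (l1 ++ M :: l2)))) as [Hsn|Hsn].
    + apply IHHs.
      * intro H; apply Hu; apply ub_op; auto.
      * intros N1 H1; apply (Hnorm (OpT o (l1 ++ N1 :: l2))); apply st_op; auto.
    + unfold surf_normal in Hsn.
      apply Classical_Pred_Type.not_all_not_ex in Hsn. destruct Hsn as [T1 HT1].
      inversion HT1; inversion H.
Qed.
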